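(* Let $\mathcal{S}$ be a parametrized system and let $\varphi$ be a parametrized formula (candidate invariant) with set of free thread-identifier variables $\mathrm{Var}(\varphi)$. Suppose the following three families of formulas are valid in the theory $T$: (P1) $\Theta(\mathrm{Var}(\varphi)) \rightarrow \varphi$; (P2) for every program location $\ell$ and every $k\in \mathrm{Var}(\varphi)$: $\varphi \wedge \tau_\ell^{(k)} \rightarrow \varphi'$; (P3) for every program location $\ell$, where $j$ is a fresh thread-identifier variable not in $\mathrm{Var}(\varphi)$: $\varphi \wedge \bigwedge_{k\in\mathrm{Var}(\varphi)} j\neq k \wedge \tau_\ell^{(j)} \rightarrow \varphi'$. Then $\mathcal{S}\vDash \Box\varphi$, i.e. $\varphi$ is a parametrized invariant of $\mathcal{S}$.
   Context: A parametrized program consists of a finite set of global variables $V_{global}$, a finite set of local variables $V_{local}$ (including a program counter $pc$ ranging over locations $1,\dots,L$), a global initial condition $\Theta_g$ over $V_{global}$, a local initial condition $\Theta_l$ over $V_{global}\cup V_{local}$, and for each location $\ell$ a transition relation $\tau_\ell$ over unprimed and primed (post-state) variables. For each $M\geq 1$, with $[M]=\{0,\dots,M-1\}$, the instance $\mathcal{S}[M]$ is the transition system with variables $V_{global}\cup\{v[a] : v\in V_{local}, a\in[M]\}$, initial condition $\Theta_g\wedge\bigwedge_{a\in[M]}\Theta_l[a]$ (replace each $v$ by $v[a]$), and transitions $\tau_\ell[a]$ for each $\ell$ and $a\in[M]$ (replace $v$ by $v[a]$ and $v'$ by $v'[a]$; all local variables of other threads are unchanged), with interleaving semantics. A run is an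 infinite sequence of states starting in an initial state with each step given by some transition. Thread identifiers form a sort $\mathsf{tid}$ (an unbounded set with only $=$ and $\neq$). For each local variable $v$ of sort $t$ there is a global array $a_v$ of sort $\mathsf{tid}\to t$, written $v(k)$ for reads and $v\{k\leftarrow e\}$ for updates. $T$ is the combination of the data theory of the program, the theory of $\mathsf{tid}$, and the theory of arrays. A parametrized formula is a first-order formula over $T$ using the global variables, the arrays $a_v$, and free variables of sort $\mathsf{tid}$ (no constant thread identifiers); $\mathrm{Var}(\varphi)$ is its set of free $\mathsf{tid}$ variables and $\varphi'$ is $\varphi$ with all program variables primed. For a set $X$ of $\mathsf{tid}$ variables, $\Theta(X)=\Theta_g\wedge\bigwedge_{k\in X}\Theta_l(k)$ where $\Theta_l(k)$ replaces each local $v$ by $v(k)$. For a $\mathsf{tid}$ variable $k$, $\tau_\ell^{(k)}$ is $\tau_\ell$ with each local $v$ replaced by $v(k)$, each $v'$ by $v'(k)$, and with all other array entries preserved (arrays $a_v'$ and $a_v$ agree except possibly at $k$). A concretization of $\varphi$ for $N$ threads is a map $\alpha:\mathrm{Var}(\varphi)\to[N]$, and $\alpha(\varphi)$ is the state predicate of $\mathcal{S}[N]$ obtained by replacing $v(k)$ by $v[\alpha(k)]$ (array updates at position $k$ are interpreted as updating $v[\alpha(k)]$ and preserving $v[a]$ for $a\neq\alpha(k)$). $\mathcal{S}\vDash\Box\varphi$ means: for every $N$ and every concretization $\alpha:\mathrm{Var}(\varphi)\to[N]$, every state of every run of $\mathcal{S}[N]$ satisfies $\alpha(\varphi)$. 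*)

(* Defs.v *)
From mathcomp Require Import all_boot.
Set Implicit Arguments. Unset Strict Implicit. Unset Printing Implicit Defensive.

(* Semantic model of a parametrized program:
   - G : type of valuations of the global variables V_global;
   - L : type of valuations of the local variables V_local (incl. pc);
   - Thg : G -> Prop                 (global initial condition Theta_g);
   - Thl : G -> L -> Prop            (local initial condition Theta_l);
   - tau l : G -> L -> G -> L -> Prop (transition relation of location l,
       over unprimed globals/locals and primed globals/locals).
   Arrays a_v for all local variables v are packed into one array
   arr : Tid -> L (arr k = valuation of all locals of thread k). *)

Definition ThetaX (G L Tid X : Type) (Thg : G -> Prop) (Thl : G -> L -> Prop)
  (g : G) (arr : Tid -> L) (rho : X -> Tid) : Prop :=
  Thg g /\ forall k : X, Thl g (arr (rho k)).

Definition tau_at (G L Tid : Type) (tau : G -> L -> G -> L -> Prop) (k : Tid)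
  (g : G) (arr : Tid -> L) (g' : G) (arr' : Tid -> L) : Prop :=
  tau g (arr k) g' (arr' k) /\ forall i : Tid, i <> k -> arr' i = arr i.

Definition inst_state (G L : Type) (M : nat) : Type := (G * ('I_M -> L))%type.

Definition inst_init (G L : Type) (Thg : G -> Prop) (Thl : G -> L -> Prop)
  (M : nat) (s : inst_state G L M) : Prop :=
  Thg s.1 /\ forall a : 'I_M, Thl s.1 (s.2 a).

Definition inst_step (G L : Type) (nloc : nat)
  (tau : 'I_nloc -> G -> L -> G -> L -> Prop)
  (M : nat) (s s' : inst_state G L M) : Prop :=
  exists (l : 'I_nloc) (a : 'I_M),
    tau l s.1 (s.2 a) s'.1 (s'.2 a) /\ forall b : 'I_M, b <> a -> s'.2 b = s.2 b.

Definition inst_run (G L : Type) (nloc : nat) (Thg : G -> Prop)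
  (Thl : G -> L -> Prop) (tau : 'I_nloc -> G -> L -> G -> L -> Prop)
  (M : nat) (r : nat -> inst_state G L M) : Prop :=
  inst_init Thg Thl (r 0) /\ forall i, inst_step tau (r i) (r i.+1).

(* A parametrized formula with free tid variables X is modelled semantically
   by its truth value in every interpretation of the sort tid (any type Tid),
   given globals g, the arrays arr : Tid -> L, and a valuation rho : X -> Tid. *)
Definition always_holds (G L X : Type) (nloc : nat) (Thg : G -> Prop)
  (Thl : G -> L -> Prop) (tau : 'I_nloc -> G -> L -> G -> L -> Prop)
  (phi : forall Tid : Type, G -> (Tid -> L) -> (X -> Tid) -> Prop) : Prop :=
  forall (N : nat) (alpha : X -> 'I_N) (r : nat -> inst_state G L N),
    inst_run Thg Thl tau r -> forall i : nat, phi 'I_N (r i).1 (r i).2 alpha.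

(* Main.v *)
Require Import Defs.
From mathcomp Require Import all_boot.

Theorem theorem1 (G L : Type) (nloc : nat) (Thg : G -> Prop)
  (Thl : G -> L -> Prop) (tau : 'I_nloc -> G -> L -> G -> L -> Prop)
  (X : finType)
  (phi : forall Tid : Type, G -> (Tid -> L) -> (X -> Tid) -> Prop) :
  (* (P1) Theta(Var(phi)) -> phi *)
  (forall (Tid : Type) (g : G) (arr : Tid -> L) (rho : X -> Tid),
      ThetaX Thg Thl g arr rho -> phi Tid g arr rho) ->
  (* (P2) phi /\ tau_l^{(k)} -> phi', for every l and k in Var(phi) *)
  (forall (l : 'I_nloc) (k : X) (Tid : Type) (g g' : G) (arr arr' : Tid -> L)
          (rho : X -> Tid),
      phi Tid g arr rho -> tau_at (tau l) (rho k) g arr g' arr' ->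
      phi Tid g' arr' rho) ->
  (* (P3) phi /\ (/\_k j <> k) /\ tau_l^{(j)} -> phi', j fresh *)
  (forall (l : 'I_nloc) (Tid : Type) (g g' : G) (arr arr' : Tid -> L)
          (rho : X -> Tid) (j : Tid),
      phi Tid g arr rho -> (forall k : X, j <> rho k) ->
      tau_at (tau l) j g arr g' arr' -> phi Tid g' arr' rho) ->
  always_holds Thg Thl tau phi.
Proof.
move=> P1 P2 P3 N alpha r [Hi Hs] i.
elim: i => [|i IH].
  apply: P1; case: Hi => Hg Hl; split => // k; exact: Hl.
have [l [a [Ht Ho]]] := Hs i.
have Htau : tau_at (tau l) a (r i).1 (r i).2 (r i.+1).1 (r i.+1).2.
  by split.
case: (pickP (fun k : X => alpha k == a)) => [k /eqP Hk | Hn].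
  apply: (P2 l k); first exact: IH.
  by rewrite Hk.
apply: (P3 l _ _ _ _ _ _ a IH) => // k Hk.
by move: (Hn k); rewrite Hk eqxx.
Qed.
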